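(* Suppose $u=u_1\ldots u_n$ and $v=v_1\ldots v_n$ in $\mathbb{P}^*$ are rearrangements of each other and both have increasing/decreasing factorizations. For $1\le i\le n-1$ let $s_i(u)=u_{i+1}\ldots u_n$ and $s_i(v)=v_{i+1}\ldots v_n$. Then for all $1\le i\le n-1$, $$d_i(u)+\Sigma(s_i(u))=d_i(v)+\Sigma(s_i(v)).$$
   Context: $\mathbb{P}^*$ is the set of finite words over the positive integers; $\Sigma(w)$ is the sum of the letters of $w$. A word $u=u_1\ldots u_n$ has an increasing/decreasing factorization if $u_1\le\cdots\le u_n$ or there is $k<n$ with $u_1\le\cdots\le u_k>u_{k+1}\ge\cdots\ge u_n$. For $1\le i\le n-1$, $D^{(i)}(u)=\{n-i+j:1\le j\le i,\ u_j>u_{n-i+j}\}$ and $d_i(u)=\sum_{n-i+j\in D^{(i)}(u)}(u_j-u_{n-i+j})$. A rearrangement of $u$ is a word obtained by permuting its letters. *)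

(* Defs.v *)
From mathcomp Require Import all_boot.
Set Implicit Arguments. Unset Strict Implicit. Unset Printing Implicit Defensive.

(* Words over positive integers: seq nat with all letters > 0.
   1-based letter access: letter u j = u_j = nth 0 u (j-1). *)
Definition pword (u : seq nat) : bool := all (fun a => 0 < a) u.

Definition letter (u : seq nat) (j : nat) : nat := nth 0 u j.-1.

Definition Sigma (w : seq nat) : nat := sumn w.

Definition inc_dec_fact (u : seq nat) : Prop :=
  sorted leq u \/
  exists k, 1 <= k < size u /\ sorted leq (take k u) /\
            letter u k > letter u k.+1 /\ sorted geq (drop k u).

Definition Dset (i : nat) (u : seq nat) : seq nat :=
  [seq size u - i + j | j <- iota 1 i & letter u j > letter u (size u - i + j)].

Definition d (i : nat) (u : seq nat) : nat :=
  \sum_(p <- Dset i u) (letter u (p - (size u - i)) - letter u p).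

Definition s (i : nat) (u : seq nat) : seq nat := drop i u.

(* Main.v *)
Require Import Defs.
From mathcomp Require Import all_boot.

Definition uni (u : seq nat) := exists k, sorted leq (take k u) /\ sorted geq (drop k u).

Definition S (m : nat) (u : seq nat) : nat :=
  \sum_(j < size u - m) minn (nth 0 u j) (nth 0 u (j + m)).

Lemma geq_trans : transitive geq.
Proof. by move=> a b c H1 H2; exact: leq_trans H2 H1. Qed.

Lemma sorted_leq_min x s : sorted leq (x :: s) -> all (leq x) (x :: s).
Proof. move=> H /=; rewrite leqnn /=; exact: order_path_min leq_trans H. Qed.

Lemma sorted_geq_min x s : sorted geq (x :: s) -> all (leq (last x s)) (x :: s).
Proof.
elim: s x => [|y s IH] x /=; first by rewrite leqnn.
move=> /andP [Hxy Hp].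
have := IH y Hp => /= /andP [Hly Hall].
by rewrite Hall andbT (leq_trans Hly Hxy).
Qed.

Lemma min_end u : uni u -> u != [::] ->
  all (leq (head 0 u)) u \/ all (leq (last 0 u)) u.
Proof.
move=> [k [HA HB]] Hne.
have Hu := cat_take_drop k u.
move: HA HB Hu; case: (take k u) => [|a A']; case: (drop k u) => [|b B'] /= HA HB Hu.
- by rewrite -Hu in Hne.
- right; rewrite -Hu /=; exact: sorted_geq_min.
- left; rewrite -Hu cats0 /=; exact: sorted_leq_min.
- have H1 := sorted_leq_min _ _ HA; have H2 := sorted_geq_min _ _ HB.
  rewrite -Hu -cat_cons last_cat.
  have -> : last (last 0 (a :: A')) (b :: B') = last b B' by [].
  have -> : head 0 ((a :: A') ++ b :: B') = a by [].
  case: (leqP a (last b B')) => Hab; [left|right]; apply/allP => z;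
    rewrite mem_cat => /orP [] Hz.
  + exact: (allP H1).
  + apply: leq_trans Hab _; exact: (allP H2).
  + apply: leq_trans (ltnW Hab) _; exact: (allP H1).
  + exact: (allP H2).
Qed.

Lemma uni_behead x u : uni (x :: u) -> uni u.
Proof.
move=> [[|k] [HA HB]].
- exists 0; rewrite take0 drop0; split => //.
  by move: HB; rewrite drop0 => /path_sorted.
- exists k; split.
  + by move: HA; rewrite take_cons => /path_sorted.
  + by move: HB; rewrite drop_cons.
Qed.

Lemma sorted_rcons_l (e : rel nat) s x : transitive e -> sorted e (rcons s x) -> sorted e s.
Proof. move=> tr; exact: (subseq_sorted tr (subseq_rcons s x)). Qed.

Lemma uni_belast u x : uni (rcons u x) -> uni u.
Proof.
move=> [k [HA HB]].
case: (leqP k (size u)) => Hk.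
- exists k; split.
  + by move: HA; rewrite -cats1 takel_cat.
  + move: HB; rewrite drop_rcons //; apply: sorted_rcons_l; exact: geq_trans.
- exists (size u); rewrite take_size drop_size; split => //.
  move: HA; rewrite take_oversize ?size_rcons //.
  apply: sorted_rcons_l; exact: leq_trans.
Qed.

Lemma S_head m x u : 0 < m -> m <= size u -> all (leq x) (x :: u) ->
  S m (x :: u) = x + S m u.
Proof.
move=> Hm Hmu Hall; rewrite /S /= subSn // big_ord_recl /=.
congr (_ + _).
  rewrite add0n; case: m Hm Hmu => // m' _ Hmu /=; apply/minn_idPl.
  by move: Hall => /= /andP [_ /allP]; apply; apply: mem_nth.
Qed.

Lemma S_last m x u : 0 < m -> m <= size u -> all (leq x) (rcons u x) ->
  S m (rcons u x) = S m u + x.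
Proof.
move=> Hm Hmu Hall; rewrite /S size_rcons subSn // big_ord_recr /=.
congr (_ + _).
- apply: eq_bigr => j _ /=.
  have Hj : j < size u - m := ltn_ord j.
  have Hj1 : j + m < size u by rewrite addnC -ltn_subRL.
  have Hj2 : j < size u by apply: leq_ltn_trans Hj1; apply: leq_addr.
  by rewrite !nth_rcons Hj1 Hj2.
- rewrite subnK // !nth_rcons ltnn eqxx.
  have Hlt : size u - m < size u by rewrite ltn_subrL Hm /=; case: (size u) Hmu => //; case: m Hm.
  rewrite Hlt; apply/minn_idPr.
  by move: Hall => /allP; apply; rewrite mem_rcons in_cons mem_nth ?orbT.
Qed.

Lemma S_small m u : size u <= m -> S m u = 0.
Proof. by move=> H; rewrite /S; move: H; rewrite -subn_eq0 => /eqP ->; rewrite big_ord0. Qed.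

Lemma S_inv m : 0 < m -> forall n u v, size u = n -> uni u -> uni v -> perm_eq u v ->
  S m u = S m v.
Proof.
move=> Hm; elim=> [|n IH] u v Hs Hu Hv Huv.
- have Hs' : size v = 0 by rewrite -(perm_size Huv).
  by move/size0nil: Hs => ->; move/size0nil: Hs' => ->.
have Hsv : size v = n.+1 by rewrite -(perm_size Huv).
case: (leqP n.+1 m) => Hnm.
  by rewrite !S_small ?Hs ?Hsv.
have Hmn : m <= n by [].
have Hdec : forall w, size w = n.+1 -> uni w -> exists x w',
    [/\ uni w', size w' = n, perm_eq w (x :: w'), all (leq x) w & S m w = x + S m w'].
  move=> w Hw Huw.
  have Hne : w != [::] by rewrite -size_eq0 Hw.
  case: (min_end w Huw Hne).
  - case: w Hw Huw Hne => // x w' [Hw] Huw _ /= Hall.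
    exists x, w'; split => //.
    + exact: uni_behead Huw.
    + by rewrite S_head // Hw.
  - case/lastP: w Hw Huw Hne => // w' x; rewrite size_rcons => -[Hw] Huw _.
    rewrite last_rcons => Hall.
    exists x, w'; split => //.
    + exact: uni_belast Huw.
    + by rewrite -cats1 perm_catC.
    + by rewrite S_last ?Hw // addnC.
have [x [u' [Hu' Hsu' Hpu Hxu ->]]] := Hdec u Hs Hu.
have [y [v' [Hv' Hsv' Hpv Hyv ->]]] := Hdec v Hsv Hv.
have Hxy : x = y.
  have xu : x \in u by rewrite (perm_mem Hpu) mem_head.
  have yv : y \in v by rewrite (perm_mem Hpv) mem_head.
  apply/eqP; rewrite eqn_leq; apply/andP; split.
  - apply: (allP Hxu); by rewrite (perm_mem Huv).
  - apply: (allP Hyv); by rewrite -(perm_mem Huv).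
subst y; congr (_ + _); apply: IH Hsu' Hu' Hv' _.
have : perm_eq (x :: u') (x :: v').
  by rewrite perm_sym in Hpu; exact: perm_trans Hpu (perm_trans Huv Hpv).
by rewrite perm_cons.
Qed.

Lemma d_rel u i : i <= size u ->
  d i u + S (size u - i) u + sumn (drop i u) = sumn u.
Proof.
move=> Hi.
rewrite /S subKn //.
have -> : d i u = \sum_(j <- iota 0 i) (nth 0 u j - nth 0 u (j + (size u - i))).
  rewrite /d /Dset big_map big_filter big_mkcond /=.
  rewrite (iotaDl 1 0) big_map /=.
  apply: eq_bigr => j _.
  rewrite addKn /letter add1n /= addnS /= addnC.
  by case: ifP => // /negbT; rewrite -leqNgt -subn_eq0 => /eqP ->.
have -> : iota 0 i = index_iota 0 i by rewrite /index_iota subn0.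
rewrite big_mkord -big_split /=.
rewrite (eq_bigr (fun j : 'I_i => nth 0 u j)); last first.
  by move=> j _; rewrite minnE subnKC // leq_subr.
rewrite -(big_mkord xpredT (fun j => nth 0 u j)) /index_iota subn0.
rewrite -(big_map (fun j => nth 0 u j) xpredT id) map_nth_iota0 // -sumnE.
by rewrite -sumn_cat cat_take_drop.
Qed.

Theorem lemma3 (u v : seq nat) :
  pword u -> pword v -> perm_eq u v ->
  inc_dec_fact u -> inc_dec_fact v ->
  forall i, 1 <= i <= (size u).-1 ->
    d i u + Sigma (s i u) = d i v + Sigma (s i v).
Proof.
move=> _ _ Huv Hu Hv i /andP [Hi1 Hi2].
have Hsv : size v = size u by rewrite (perm_size Huv).
have Hlt : i < size u by move: Hi2 Hi1; case: (size u) => [|n] /= H1 H2; [move: H1 H2; case: i | ].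
have Hi : i <= size u by exact: ltnW.
have uniI : forall w, inc_dec_fact w -> uni w.
  move=> w [H|[k [_ [H1 [_ H2]]]]].
  - by exists (size w); rewrite take_size drop_size.
  - by exists k.
have HS : S (size u - i) u = S (size u - i) v.
  have Hm : 0 < size u - i by rewrite subn_gt0.
  exact (S_inv (size u - i) Hm (size u) u v (erefl (size u)) (uniI u Hu) (uniI v Hv) Huv).
apply/eqP; rewrite -(eqn_add2r (S (size u - i) u)); apply/eqP.
rewrite /Sigma /s addnAC d_rel // HS -{1}Hsv addnAC d_rel ?Hsv //.
exact: perm_sumn.
Qed.
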